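(* Let $v>3$ and let $(X,\mathcal{B})$ be an STS$(v)$ with $X=\{1,\dots,v\}$. Then there is a sequencing $\pi=[x_1\,x_2\,\cdots\,x_v]$ of $X$ that is $3$-good for $(X,\mathcal{B})$, i.e. $\{x_i,x_{i+1},x_{i+2}\}\notin\mathcal{B}$ for all $1\le i\le v-2$.
   Context: A Steiner triple system of order $v$, STS$(v)$, is a pair $(X,\mathcal{B})$ where $X$ is a set of $v$ points and $\mathcal{B}$ is a set of 3-subsets of $X$ (blocks) such that every pair of distinct points lies in exactly one block. A sequencing of $X$ is an ordering $[x_1\,x_2\,\cdots\,x_v]$ of all points of $X$, each appearing exactly once. It is $3$-good if no three consecutive points form a block. *)

(* Defs.v *)
From mathcomp Require Import all_boot.
Set Implicit Arguments. Unset Strict Implicit. Unset Printing Implicit Defensive.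

(* Points of X = {1,...,v} are represented by 'I_v = {0,...,v-1}. *)

Definition is_STS (v : nat) (B : {set {set 'I_v}}) : Prop :=
  (forall b, b \in B -> #|b| = 3) /\
  (forall x y : 'I_v, x != y ->
     #|[set b in B | (x \in b) && (y \in b)]| = 1).

Definition is_sequencing (v : nat) (s : seq 'I_v) : Prop :=
  perm_eq s (enum 'I_v).

Definition three_good (v : nat) (B : {set {set 'I_v}}) (s : seq 'I_v) : Prop :=
  forall (x0 : 'I_v) (i : nat), i + 2 < size s ->
    [set nth x0 s i; nth x0 s i.+1; nth x0 s i.+2] \notin B.

(* Main.v *)
Require Import Defs.
From mathcomp Require Import all_boot.

Set Implicit Arguments. Unset Strict Implicit. Unset Printing Implicit Defensive.

Lemma blk_uniq v (B : {set {set 'I_v}}) : is_STS B ->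
  forall b1 b2 p q, b1 \in B -> b2 \in B -> p != q ->
  p \in b1 -> q \in b1 -> p \in b2 -> q \in b2 -> b1 = b2.
Proof.
case=> _ H b1 b2 p q h1 h2 pq p1 q1 p2 q2.
have /cards1P [c Hc] : #|[set b in B | (p \in b) && (q \in b)]| == 1 by rewrite H.
have : b1 \in [set b in B | (p \in b) && (q \in b)] by rewrite inE h1 p1 q1.
have : b2 \in [set b in B | (p \in b) && (q \in b)] by rewrite inE h2 p2 q2.
by rewrite Hc !inE => /eqP -> /eqP ->.
Qed.

Fixpoint goodseq v (B : {set {set 'I_v}}) (s : seq 'I_v) : Prop :=
  match s with
  | a :: ((b :: c :: _) as t) => [set a; b; c] \notin B /\ goodseq B t
  | _ => True
  end.

Lemma goodseqP v (B : {set {set 'I_v}}) s : goodseq B s -> three_good B s.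
Proof.
rewrite /three_good.
elim: s => [|a s IH]; first by move=> _ x0 [|i].
case: s IH => [|b [|c s]] IH.
- by move=> _ x0 [|[|i]].
- by move=> _ x0 [|[|i]].
move=> [Hn Hg] x0 [|i] Hi; first by [].
exact: (IH Hg x0 i).
Qed.

Lemma avoid1 (T : finType) (S : {set T}) (P : pred T) : 1 < #|S| ->
  {in S &, forall x y, P x -> P y -> x = y} -> exists2 x, x \in S & ~~ P x.
Proof.
move=> HS HP.
case: (boolP [exists x in S, ~~ P x]) => [/exists_inP [x xS Px]|/exists_inPn H].
  by exists x.
have : #|S| <= 1.
  apply/card_le1_eqP => x y xS yS.
  apply: HP => //; by move: (H x xS) (H y yS); rewrite !negbK.
by rewrite leqNgt HS.
Qed.

Lemma avoid2 (T : finType) (S : {set T}) (P Q : pred T) : 2 < #|S| ->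
  {in S &, forall x y, P x -> P y -> x = y} ->
  {in S &, forall x y, Q x -> Q y -> x = y} ->
  exists2 x, x \in S & ~~ P x && ~~ Q x.
Proof.
move=> HS HP HQ.
case: (boolP [exists x in S, P x]) => [/exists_inP [p pS Pp]|/exists_inPn H].
  have [x xS Qx] : exists2 x, x \in S :\ p & ~~ Q x.
    apply: avoid1.
    - by move: HS; rewrite (cardsD1 p) pS.
    - by move=> x y /setD1P [_ xS] /setD1P [_ yS]; apply: HQ.
  move/setD1P: xS => [xp xS]; exists x => //; rewrite Qx andbT.
  by apply/negP => Px; move/eqP: xp; apply; apply: HP.
have [x xS Qx] : exists2 x, x \in S & ~~ Q x.
  by apply: avoid1 => //; apply: ltn_trans HS.
by exists x => //; rewrite Qx H.
Qed.

Lemma F2 v (B : {set {set 'I_v}}) (HB : is_STS B) (T : {set 'I_v}) :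
  {in T &, forall x y, (T :\ x \in B) -> (T :\ y \in B) -> x = y}.
Proof.
move=> x y xT yT Bx By.
case: (eqVneq x y) => // nxy.
have c3 : #|T :\ x| = 3 := HB.1 _ Bx.
have yTx : y \in T :\ x by rewrite !inE eq_sym nxy yT.
have : 1 < #|T :\ x :\ y| by move: c3; rewrite (cardsD1 y (T :\ x)) yTx add1n => -[->].
case/card_gt1P => [z [w [zT wT zw]]].
move: zT wT; rewrite !inE => /and3P [zy zx zT] /and3P [wy wx wT].
have E : T :\ x = T :\ y.
  by apply: (blk_uniq HB Bx By zw); rewrite !inE ?zy ?zx ?zT ?wy ?wx ?wT.
by move: yTx; rewrite E !inE eqxx.
Qed.

Lemma F1 v (B : {set {set 'I_v}}) (HB : is_STS B) a b (ab : a != b)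
  (S : {set 'I_v}) (aS : a \notin S) (bS : b \notin S) :
  {in S &, forall x y, [set a; b; x] \in B -> [set a; b; y] \in B -> x = y}.
Proof.
move=> x y xS yS Bx By.
have E : [set a; b; x] = [set a; b; y].
  by apply: (blk_uniq HB Bx By ab); rewrite !inE eqxx ?orbT.
have : x \in [set a; b; x] by rewrite !inE eqxx !orbT.
rewrite E !inE => /orP [/orP [/eqP xa|/eqP xb]|/eqP //].
- by move: aS; rewrite -xa xS.
- by move: bS; rewrite -xb xS.
Qed.

Lemma ext v (B : {set {set 'I_v}}) (HB : is_STS B) n :
  forall (S : {set 'I_v}) a b, #|S| = n -> a \notin S -> b \notin S -> a != b ->
  (n = 1 -> forall c, c \in S -> [set a; b; c] \notin B) ->
  (n = 2 -> b |: S \notin B) ->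
  (n = 3 -> S \notin B) ->
  exists s, [/\ uniq s, s =i S & goodseq B (a :: b :: s)].
Proof.
elim: n => [|n IH] S a b cS aS bS ab C1 C2 C3.
  exists [::]; split => //.
  move=> y; rewrite in_nil; apply/esym/negP => yS.
  by move: cS; rewrite (cardsD1 y) yS.
have [x [xS Hx1 Hx3]] : exists x, [/\ x \in S, [set a; b; x] \notin B &
                                   (n = 3 -> S :\ x \notin B)].
  case: n IH cS C1 C2 C3 => [|n] IH cS C1 C2 C3.
    have /card_gt0P [x xS] : 0 < #|S| by rewrite cS.
    by exists x; split => //; apply: C1.
  case: n IH cS C1 C2 C3 => [|n] IH cS C1 C2 C3.
    have [x xS Px] : exists2 x, x \in S & ~~ ([set a; b; x] \in B).
      by apply: avoid1; [rewrite cS | exact: F1].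
    by exists x.
  have [x xS /andP [Px Qx]] : exists2 x, x \in S &
      ~~ ([set a; b; x] \in B) && ~~ ((n.+2 == 3) && (S :\ x \in B)).
    apply: avoid2; [by rewrite cS | exact: F1 |].
    by move=> x y xS yS /andP [_ Bx] /andP [_ By]; apply: (F2 HB xS yS).
  exists x; split => // n3; move: Qx; rewrite n3 eqxx //.
have bx : b != x by apply/eqP => bx; move: bS; rewrite bx xS.
have [s [us ms gs]] : exists s, [/\ uniq s, s =i S :\ x & goodseq B (b :: x :: s)].
  apply: IH.
  - by move: cS; rewrite (cardsD1 x) xS add1n => -[].
  - by rewrite !inE negb_and bS orbT.
  - by rewrite !inE eqxx.
  - exact: bx.
  - move=> n1 c; rewrite !inE => /andP [cx cS'].
    have HS : S = [set x; c].
      apply/eqP; rewrite eq_sym eqEcard subUset !sub1set xS cS' /= cards2 cS n1.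
      by rewrite eq_sym cx.
    have -> : [set b; x; c] = b |: S by rewrite HS; apply/setP => y; rewrite !inE orbA.
    by apply: C2; rewrite n1.
  - by move=> n2; rewrite setD1K //; apply: C3; rewrite n2.
  - exact: Hx3.
exists (x :: s); split.
- by rewrite /= us andbT ms !inE eqxx.
- move=> y; rewrite in_cons ms !inE.
  by case: (eqVneq y x) => [->|] //=; rewrite xS.
- by split.
Qed.

Theorem theorem1 (v : nat) (B : {set {set 'I_v}}) :
  3 < v -> is_STS B ->
  exists s : seq 'I_v, is_sequencing s /\ three_good B s.
Proof.
move=> v3 HB.
have cT : #|[set: 'I_v]| = v by rewrite cardsT card_ord.
have [x1 _ H1] : exists2 x1, x1 \in [set: 'I_v] & ~~ ([set: 'I_v] :\ x1 \in B).
  apply: avoid1; first by rewrite cT; apply: ltn_trans v3.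
  exact: F2.
set T := [set: 'I_v] :\ x1.
have cT1 : #|T| = v.-1.
  by move: cT; rewrite (cardsD1 x1 [set: 'I_v]) inE add1n => /(congr1 predn).
have [x2 x2T H2] : exists2 x2, x2 \in T & ~~ (T :\ x2 \in B).
  apply: avoid1; first by rewrite cT1; case: v v3 {cT cT1 T H1 x1 B HB} => [|[|[|]]].
  exact: F2.
set S := T :\ x2.
have cS : #|S| = v.-2.
  by move: cT1; rewrite (cardsD1 x2 T) x2T add1n => /(congr1 predn) /= ->.
have x12 : x1 != x2 by move: x2T; rewrite !inE eq_sym => /andP [].
have [s [us ms gs]] : exists s, [/\ uniq s, s =i S & goodseq B (x1 :: x2 :: s)].
  apply: (@ext v B HB v.-2) => //.
  - by rewrite !inE eqxx andbF.
  - by rewrite !inE eqxx.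
  - move=> v1; exfalso.
    have h : forall m, 3 < m -> m.-2 = 1 -> False by case=> [|[|[|[|m]]]].
    exact: h v3 v1.
  - by move=> _; rewrite setD1K.
exists [:: x1, x2 & s]; split; last exact: goodseqP.
apply: uniq_perm; [|exact: enum_uniq|].
- by rewrite /= us !inE !ms !inE !eqxx /= !andbF andbT orbF.
- move=> y; rewrite mem_enum !in_cons ms !inE.
  by case: (eqVneq y x1) => //=; case: (eqVneq y x2).
Qed.
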